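(* Let $X$ be an SL-space with spatial part $Y$, and let $U\subseteq X$. Then $U$ is a clopen Scott upset of $X$ if and only if there is a compact open subset $V$ of $Y$ such that $\mathrm{cl}\,V=U$ (closure taken in $X$).
   Context: A Priestley space is a Stone space $X$ with a partial order such that clopen upsets separate points. An L-space is a Priestley space in which the downset of each clopen set is clopen and the closure of each open upset is open. The spatial part of $X$ is $Y=\{y\in X\mid{\downarrow}y\text{ is clopen}\}$, topologized by declaring $V\subseteq Y$ open iff $V=U\cap Y$ for some clopen upset $U$ of $X$. $X$ is an SL-space if $Y$ is dense in $X$. A Scott upset of $X$ is a closed upset $F$ with $\min F\subseteq Y$. *)

(* Defs.v *)
From mathcomp Require Import all_boot all_order.
From mathcomp Require Import all_classical all_reals all_analysis.
Set Implicit Arguments. Unset Strict Implicit. Unset Printing Implicit Defensive.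
Local Open Scope classical_set_scope.

Section PriestleyDefs.
Context {T : topologicalType} (le : T -> T -> Prop).

Definition partial_order :=
  [/\ (forall x, le x x), (forall x y, le x y -> le y x -> x = y)
    & (forall x y z, le x y -> le y z -> le x z)].

Definition is_upset (A : set T) := forall x y, A x -> le x y -> A y.
Definition downset (A : set T) : set T := [set x | exists2 y, A y & le x y].
Definition downset1 (x : T) : set T := downset [set x].

Definition stone_space := [/\ compact [set: T], hausdorff_space T & zero_dimensional T].

Definition priestley_space :=
  [/\ stone_space, partial_order
    & forall x y, ~ le x y -> exists U, [/\ clopen U, is_upset U, U x & ~ U y]].

Definition L_space :=
  [/\ priestley_space,
      (forall U, clopen U -> clopen (downset U))
    & (forall U, open U -> is_upset U -> open (closure U))].

Definition spatial : set T := [set y | clopen (downset1 y)].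

Definition Y_open (V : set T) :=
  exists U, [/\ clopen U, is_upset U & V = U `&` spatial].

Definition Y_compact (V : set T) :=
  forall (I : Type) (W : I -> set T), (forall i, Y_open (W i)) ->
    V `<=` \bigcup_i W i ->
    exists2 D : set I, finite_set D & V `<=` \bigcup_(i in D) W i.

Definition Y_compact_open (V : set T) :=
  [/\ V `<=` spatial, Y_open V & Y_compact V].

Definition SL_space := L_space /\ closure spatial = [set: T].

Definition minimal (F : set T) : set T :=
  [set x | F x /\ forall z, F z -> le z x -> z = x].

Definition scott_upset (F : set T) :=
  [/\ closed F, is_upset F & minimal F `<=` spatial].

End PriestleyDefs.

(* Main.v *)
Require Import Defs.
From mathcomp Require Import all_boot all_order.
From mathcomp Require Import all_classical all_reals all_analysis.
Local Open Scope classical_set_scope.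

Lemma dense_open (T : topologicalType) (Y W : set T) :
  closure Y = setT -> open W -> W `<=` closure (W `&` Y).
Proof.
move=> dY oW p Wp B nB.
have nWB : nbhs p (W `&` B) by apply: filterI => //; apply: open_nbhs_nbhs.
have : closure Y p by rewrite dY.
move=> /(_ _ nWB) [z [Yz [Wz Bz]]]; by exists z.
Qed.

Lemma fin_subcover (T : topologicalType) (A : set T) (I : Type) (f : I -> set T) :
  compact A -> (forall i, open (f i)) -> A `<=` \bigcup_i f i ->
  exists2 D : set I, finite_set D & A `<=` \bigcup_(i in D) f i.
Proof.
move=> cA oF cov; apply: contrapT => nD.
have H : forall D : set I, finite_set D -> (A `\` \bigcup_(i in D) f i) !=set0.
  move=> D fD; apply: contrapT => ne; apply: nD; exists D => // x Ax.
  apply: contrapT => nx; apply: ne; by exists x.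
pose G := filter_from [set D : set I | finite_set D] (fun D => A `\` \bigcup_(i in D) f i).
have FG : Filter G.
  apply: filter_from_filter; first by exists set0; exact: finite_set0.
  move=> D1 D2 fD1 fD2; exists (D1 `|` D2); first by rewrite /= finite_setU; split.
  move=> x [Ax nx]; split; split => // -[i Di fxx]; apply: nx; exists i => //.
  by left. by right.
have PG : ProperFilter G by apply: filter_from_proper.
have GA : G A by exists set0; [exact: finite_set0| move=> x []].
have [p [Ap clp]] := cA G PG GA.
have [i _ fip] := cov p Ap.
have GB : G (A `\` f i).
  exists [set i]; first exact: finite_set1.
  move=> x [Ax nx]; split => // fxx; apply: nx; by exists i.
have [z [[_ nz] fz]] := clp _ _ GB (open_nbhs_nbhs (conj (oF i) fip)).
by [].
Qed.
Lemma down1_closed (T : topologicalType) (le : T -> T -> Prop) (a : T) :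
  priestley_space le -> closed (downset1 le a).
Proof.
move=> [_ _ sep] p clp; apply: contrapT => np.
have npa : ~ le p a by move=> h; apply: np; exists a.
have [Ou [[oO _] upO Oup nOa]] := sep _ _ npa.
have [z [[y -> zy] Oz]] := clp Ou (open_nbhs_nbhs (conj oO Oup)).
exact: nOa (upO _ _ Oz zy).
Qed.

Lemma exists_min (T : topologicalType) (le : T -> T -> Prop) (F : set T) (x : T) :
  priestley_space le -> closed F -> F x ->
  exists m, minimal le F m /\ le m x.
Proof.
move=> PS clF Fx; have [[cT _ _] [lerefl leanti letrans] _] := PS.
pose S := {z : T | F z /\ le z x}.
pose R : rel S := fun a b => `[< le (proj1_sig b) (proj1_sig a) >].
have [t tmax] : exists t, forall s, R t s -> s = t.
  apply: (@Zorn S R).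
  - by move=> t; apply/asboolP.
  - move=> r s t /asboolP h1 /asboolP h2; apply/asboolP; exact: letrans h2 h1.
  - move=> [s ps] [t pt] /asboolP h1 /asboolP h2; apply: eq_exist; exact: leanti.
  move=> A Atot.
  have [[s0 As0]|nA] := pselect (exists s, A s); last first.
    exists (exist _ x (conj Fx (lerefl x))) => s As; exfalso; apply: nA; by exists s.
  pose G := filter_from A (fun s : S => F `&` downset1 le (proj1_sig s)).
  have FG : Filter G.
    apply: filter_from_filter; first by exists s0.
    move=> s t As At; have [/asboolP h|/asboolP h] := Atot s t As At.
    + exists t => // z [Fz [y -> zy]]; split; split => //; last by exists (proj1_sig t).
      by exists (proj1_sig s) => //; exact: letrans zy h.
    + exists s => // z [Fz [y -> zy]]; split; split => //; first by exists (proj1_sig s).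
      by exists (proj1_sig t) => //; exact: letrans zy h.
  have PG : ProperFilter G.
    apply: filter_from_proper => // s As; exists (proj1_sig s); split.
      by case: s {As} => ? [].
    by exists (proj1_sig s).
  have GT : G setT by exists s0.
  have [p [_ clp]] := cT G PG GT.
  have inp : forall s, A s -> (F `&` downset1 le (proj1_sig s)) p.
    move=> s As; have := closedI clF (@down1_closed _ le (proj1_sig s) PS); apply => B nB.
    by apply: clp nB; exists s.
  have [Fp [y ys py]] := inp s0 As0.
  have pS : F p /\ le p x.
    split => //; apply: letrans py _; rewrite ys; by case: s0 {As0 ys} => ? [].
  exists (exist _ p pS) => s As; apply/asboolP => /=.
  by have [_ [y' -> ]] := inp s As.
exists (proj1_sig t); split; last by case: t {tmax} => ? [].
split; first by case: t {tmax} => ? [].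
move=> z Fz zt.
have zS : F z /\ le z x by split => //; apply: letrans zt _; case: t {tmax} => ? [].
have := tmax (exist _ z zS) (asboolT zt).
by move=> e; rewrite -e.
Qed.

Theorem lemma4p10 (T : topologicalType) (le : T -> T -> Prop) :
  SL_space le ->
  forall U : set T,
    (clopen U /\ scott_upset le U) <->
    (exists V : set T, Y_compact_open le V /\ closure V = U).
Proof.
move=> [[PS Ldown Lclos] dY] U.
have [[cT _ _] _ sep] := PS.
split.
- move=> [[oU cU] [_ upU minY]].
  exists (U `&` spatial le); split.
  + split.
    * by move=> ? [].
    * by exists U.
    * move=> I W hW cov.
      have hW' : forall i, exists Ui, [/\ clopen Ui, is_upset le Ui & W i = Ui `&` spatial le] := hW.
      have [g hg] := choice hW'.
      have covU : U `<=` \bigcup_i g i.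
        move=> x Ux; have [m [[Um mmin] mx]] := @exists_min _ le _ _ PS cU Ux.
        have Ym := minY m (conj Um mmin).
        have [i _ Wim] := cov m (conj Um Ym).
        have [_ upg eW] := hg i; rewrite eW in Wim; case: Wim => gim _.
        by exists i => //; exact: upg _ _ gim mx.
      have cUc : compact U by apply: (subclosed_compact cU cT).
      have ogi : forall i, open (g i) by move=> i; have [[? _] _ _] := hg i.
      have [D fD covD] := @fin_subcover _ _ _ _ cUc ogi covU.
      exists D => // x [Ux Yx]; have [i Di gix] := covD x Ux; exists i => //.
      by have [_ _ ->] := hg i.
  + apply/seteqP; split.
    * move=> p cp; apply: cU; exact: (closureS (@subIsetl _ U _) cp).
    * exact: dense_open.
- move=> [V [[VY [W [[oW cW] upW ->]] Vc] <-]].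
  have eW : closure (W `&` spatial le) = W.
    apply/seteqP; split.
    * move=> p cp; apply: cW; exact: (closureS (@subIsetl _ W _) cp).
    * exact: dense_open.
  rewrite eW; split; first by split.
  split => // m [Wm mmin]; apply: contrapT => nYm.
  have hsep : forall i : {v | (W `&` spatial le) v},
      exists Ou, [/\ clopen Ou, is_upset le Ou, Ou (proj1_sig i) & ~ Ou m].
    move=> [v [Wv Yv]]; apply: sep => /= vm.
    by have e := mmin v Wv vm; apply: nYm; rewrite -e.
  have [g hg] := choice hsep.
  have h1 : forall i, Y_open le (g i `&` spatial le).
    by move=> i; exists (g i); have [? ? _ _] := hg i; split.
  have h2 : W `&` spatial le `<=` \bigcup_i (g i `&` spatial le).
    move=> v Vv; exists (exist _ v Vv) => //; split; last by case: Vv.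
    by have [_ _ ? _] := hg (exist _ v Vv).
  have [D fD covD] := Vc _ (fun i => g i `&` spatial le) h1 h2.
  pose Ob := \bigcup_(i in D) g i.
  have clO : closed Ob.
    apply: (@closed_bigcup T {classic {v | (W `&` spatial le) v}} D g fD).
    by move=> i _; have [[_ ?] _ _ _] := hg i.
  have oN : open (W `&` ~` Ob) by apply: openI => //; rewrite openC.
  have mN : (W `&` ~` Ob) m.
    split => // -[i _ gim]; by have [_ _ _ ?] := hg i.
  have [z [[[Wz nOz] Yz] _]] := @dense_open _ _ _ dY oN _ mN setT (@filterT _ (nbhs m) _).
  have [i Di [giz _]] := covD z (conj Wz Yz).
  by apply: nOz; exists i.
Qed.
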